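(* Let $s,t,q,N$ be integers with $0\le s<q$, $1\le t<q$, $N\ge0$, $t\nmid q$ and $\gcd(t,q)=1$. Write $q=\overline qt+\widehat q$ ($1\le\widehat q<t$), $s=\overline st+\widehat s$ ($0\le\widehat s<t$). Let $S^+(s,t,q,N)=\sum_{k=0}^N\lfloor(s+kt)/q\rfloor$, $M=\lfloor(s+Nt)/q\rfloor$, $x_M=(Mq-s)/t$ and $S=\overline q\frac{(M-1)M}2+M(N-\lceil x_M\rceil+1)$. Let $H=\{k\in\mathbb N:(\widehat s-k\widehat q)\bmod t<\widehat q\}$ (the hS-type indices), $J=H\cap\{0,\dots,t-1\}=\{j_0<j_1<\dots<j_{\widehat q-1}\}$, and for a finite set $K$ let $S_K=\sum_{k\in K}k$. Then: (a) if $j_0\ge M$, $S^+(s,t,q,N)=S$; (b.1) if $j_0<M\le j_{\widehat q-1}$, then $S^+(s,t,q,N)=S+S_K$ with $K=H\cap\{0,\dots,M-1\}$; (b.2) if $j_{\widehat q-1}<M$ and $j_0+t\ge M$, then $S^+(s,t,q,N)=S+S_J$; (b.3) if $j_{\widehat q-1}<M$ and $j_0+t<M$, set $u=\lfloor(M-1)/t\rfloor$ and $K=H\cap\{ut,\dots,M-1\}$; then $S^+(s,t,q,N)=S+uS_J+\widehat q\,t\frac{(u-1)u}2+S_K$.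
   Context: Here $r\bmod t$ denotes the representative of $r$ in $\{0,\dots,t-1\}$. *)

(* Defs.v *)
From HB Require Import structures.
From mathcomp Require Import all_boot all_order all_algebra.
Set Implicit Arguments. Unset Strict Implicit. Unset Printing Implicit Defensive.
Import Order.TTheory GRing.Theory Num.Theory.
Local Open Scope ring_scope.

Definition Splus (s t q N : nat) : nat := (\sum_(0 <= k < N.+1) ((s + k * t) %/ q))%N.

Definition Mval (s t q N : nat) : nat := ((s + N * t) %/ q)%N.

Definition qbar (t q : nat) : nat := (q %/ t)%N.
Definition qhat (t q : nat) : nat := (q %% t)%N.
Definition shat (s t : nat) : nat := (s %% t)%N.

Definition xM (s t q N : nat) : rat :=
  ((Mval s t q N * q)%:R - s%:R) / t%:R.

Definition Sval (s t q N : nat) : rat :=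
  let M : rat := (Mval s t q N)%:R in
  (qbar t q)%:R * ((M - 1) * M / 2)
  + M * (N%:R - (Num.ceil (xM s t q N))%:~R + 1).

Definition inH (s t q : nat) (k : nat) : bool :=
  (((shat s t)%:Z - (k * qhat t q)%:Z) %% (t%:Z))%Z < (qhat t q)%:Z.

Definition Jseq (s t q : nat) : seq nat := [seq k <- iota 0 t | inH s t q k].
Definition jj (s t q : nat) (i : nat) : nat := nth 0 (Jseq s t q) i.

Definition SH (s t q : nat) (a b : nat) : nat := (\sum_(a <= k < b | inH s t q k) k)%N.

(* Main.v *)
Require Import Defs.
From HB Require Import structures.
From mathcomp Require Import all_boot all_order all_algebra.
From mathcomp Require Import zify ring lra.
Import Order.TTheory GRing.Theory Num.Theory.
Local Open Scope ring_scope.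

Lemma divz_uniq (X a r : int) (t : nat) : (0 < t)%N -> 0 <= r -> r < t%:Z ->
  X = a * t%:Z + r -> (X %/ t%:Z)%Z = a.
Proof.
move=> t0 r0 rt ->; rewrite divzMDl; last by rewrite eqz_nat -lt0n.
by rewrite divz_small ?addr0 //; apply/andP; split.
Qed.

Lemma divz_subh (X h : int) (t : nat) : (0 < t)%N -> 0 <= h -> h <= t%:Z ->
  ((X - h) %/ t%:Z)%Z = (X %/ t%:Z)%Z - ((X %% t%:Z)%Z < h)%R%:Z.
Proof.
move=> t0 h0 ht.
have tn0 : t%:Z != 0 by rewrite eqz_nat -lt0n.
have r0 := modz_ge0 X tn0.
have rt : (X %% t%:Z)%Z < t%:Z by apply: ltz_pmod; rewrite ltz_nat.
have e := divz_eq X t%:Z.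
set a := (X %/ t%:Z)%Z in e *; set r := (X %% t%:Z)%Z in e r0 rt *.
case: ltP => hr /=.
- apply: (@divz_uniq _ (a - 1) (r - h + t%:Z)) => //; lia.
- rewrite subr0; apply: (@divz_uniq _ a (r - h)) => //; lia.
Qed.

Lemma ceil_unique (x : rat) (n : int) : (n - 1)%:~R < x -> x <= n%:~R -> Num.ceil x = n.
Proof.
move=> h1 h2; apply/eqP; rewrite eq_le ceil_le_int h2 /=.
have : (n - 1 < Num.ceil x) by rewrite ceil_gt_int.
lia.
Qed.

Lemma ceil_divz (X : int) (t : nat) : (0 < t)%N ->
  Num.ceil (X%:~R / t%:R : rat) = - ((- X) %/ t%:Z)%Z.
Proof.
move=> t0.
have tn0 : t%:Z != 0 by rewrite eqz_nat -lt0n.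
have r0 := modz_ge0 (- X) tn0.
have rt : ((- X) %% t%:Z)%Z < t%:Z by apply: ltz_pmod; rewrite ltz_nat.
have e := divz_eq (- X) t%:Z.
set a := ((- X) %/ t%:Z)%Z in e *; set r := ((- X) %% t%:Z)%Z in e r0 rt *.
have tR : (0 : rat) < t%:R by rewrite ltr0n.
have eX : X = - a * t%:Z - r by rewrite -[X]opprK e; ring.
have key : X%:~R / t%:R = (- a)%:~R - r%:~R / t%:R :> rat.
  rewrite eX rmorphB rmorphM /= -[t%:Z%:~R]/(t%:R) ; field.
  by rewrite lt0r_neq0.
have q0 : (0 : rat) <= r%:~R / t%:R by rewrite divr_ge0 // ?ler0z // ler0n.
have q1 : r%:~R / t%:R < (1 : rat).
  by rewrite ltr_pdivrMr // mul1r -[t%:R]/((t%:Z)%:~R : rat) ltr_int.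
rewrite key; clearbody a r; apply: ceil_unique; rewrite ?rmorphB /= ?rmorph1; lra.
Qed.

Section Fix.
Variables (s t q : nat).
Hypothesis t0 : (0 < t)%N.

Local Notation qb := (qbar t q).
Local Notation qh := (qhat t q).
Local Notation sh := (shat s t).

Lemma tn0 : t%:Z != 0. Proof. by rewrite eqz_nat -lt0n. Qed.

Lemma qdecZ : q%:Z = qb%:Z * t%:Z + qh%:Z.
Proof. by rewrite /qbar /qhat -PoszM -PoszD -divn_eq. Qed.
Lemma sdecZ : s%:Z = (s %/ t)%:Z * t%:Z + sh%:Z.
Proof. by rewrite /shat -PoszM -PoszD -divn_eq. Qed.
Lemma qh_lt : (qh < t)%N. Proof. by rewrite /qhat ltn_pmod. Qed.

Lemma inH_mod M : inH s t q M = (((s%:Z - (M * q)%:Z) %% t%:Z)%Z < qh%:Z).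
Proof.
rewrite /inH; congr (_ < _).
have -> : s%:Z - (M * q)%:Z = ((s %/ t)%:Z - M%:Z * qb%:Z) * t%:Z + (sh%:Z - (M * qh)%:Z).
  rewrite !PoszM qdecZ sdecZ; ring.
by rewrite modzMDl.
Qed.

Lemma inH_per k u : inH s t q (k + u * t) = inH s t q k.
Proof.
rewrite /inH; congr (_ < _).
have -> : sh%:Z - ((k + u * t) * qh)%:Z = (- (u%:Z * qh%:Z)) * t%:Z + (sh%:Z - (k * qh)%:Z).
  rewrite !PoszM PoszD PoszM; ring.
by rewrite modzMDl.
Qed.

Lemma ceilM M : Num.ceil (((M * q)%:R - s%:R) / t%:R : rat) = - ((s%:Z - (M * q)%:Z) %/ t%:Z)%Z.
Proof.
have -> : ((M * q)%:R - s%:R : rat) = ((M * q)%:Z - s%:Z)%:~R.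
  by rewrite rmorphB.
by rewrite ceil_divz // opprB.
Qed.

Lemma stepC M : ((s%:Z - (M.+1 * q)%:Z) %/ t%:Z)%Z
   = ((s%:Z - (M * q)%:Z) %/ t%:Z)%Z - qb%:Z - (inH s t q M)%:Z.
Proof.
have -> : s%:Z - (M.+1 * q)%:Z = (- qb%:Z) * t%:Z + ((s%:Z - (M * q)%:Z) - qh%:Z).
  rewrite !PoszM -addn1 PoszD qdecZ; ring.
rewrite divzMDl ?tn0 // divz_subh //; last by rewrite lez_nat ltnW // qh_lt.
rewrite inH_mod; ring.
Qed.


Lemma countD n : ((sh%:Z - (n * qh)%:Z) %/ t%:Z)%Z
   = ((sh%:Z) %/ t%:Z)%Z - (count (inH s t q) (iota 0 n))%:Z.
Proof.
elim: n => [|n IH]; first by rewrite mul0n subr0 /= subr0.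
have -> : sh%:Z - (n.+1 * qh)%:Z = (sh%:Z - (n * qh)%:Z) - qh%:Z.
  rewrite !PoszM -addn1 PoszD; ring.
rewrite divz_subh //; last by rewrite lez_nat ltnW // qh_lt.
rewrite IH -addn1 iotaD count_cat /= addn0 PoszD /inH; ring.
Qed.

Lemma countJ : count (inH s t q) (iota 0 t) = qh.
Proof.
have := countD t.
have -> : sh%:Z - (t * qh)%:Z = (- qh%:Z) * t%:Z + sh%:Z by rewrite PoszM; ring.
rewrite divzMDl ?tn0 // => h.
have : (count (inH s t q) (iota 0 t))%:Z = qh%:Z by rewrite -[LHS]opprK; lia.
by case.
Qed.

End Fix.

Lemma SH_S s t q a b : (a <= b)%N -> SH s t q a b.+1 = (SH s t q a b + inH s t q b * b)%N.
Proof.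
move=> ab; rewrite /SH big_mkcond big_nat_recr //= -big_mkcond.
by case: (inH s t q b); rewrite ?mul1n ?mul0n.
Qed.

Lemma main_id s t q N : (s < q)%N -> (0 < t)%N -> (t < q)%N ->
  (Splus s t q N)%:R = Sval s t q N + (SH s t q 0 (Mval s t q N))%:R :> rat.
Proof.
move=> sq t0 tq.
elim: N => [|N IH].
  rewrite /Splus /Sval /Mval big_nat1 mul0n addn0 divn_small //= /SH big_geq //.
  by rewrite !mul0r mulr0 !add0r.
have hS : Splus s t q N.+1 = (Splus s t q N + Mval s t q N.+1)%N.
  by rewrite /Splus big_nat_recr.
set M := Mval s t q N in IH *.
have hM1 : (M <= Mval s t q N.+1)%N.
  by rewrite /M /Mval leq_div2r // leq_add2l leq_mul2r leqnSn orbT.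
have hM2 : (Mval s t q N.+1 <= M.+1)%N.
  rewrite /M /Mval -[X in (_ <= X)%N](divnMDl 1) ?(ltn_trans t0) // mul1n.
  by rewrite leq_div2r // mulSn; lia.
have hN1 : N.+1%:R = N%:R + 1 :> rat by rewrite -natr1.
have [hE|hE] : Mval s t q N.+1 = M \/ Mval s t q N.+1 = M.+1 by lia.
  rewrite hS natrD IH hE.
  rewrite /Sval /xM hE -/M hN1.
  set c := Num.ceil _; ring.
have lo : (s + N * t < M.+1 * q)%N.
  by rewrite /M /Mval ltn_ceil // (ltn_trans t0).
have hi : (M.+1 * q <= s + N.+1 * t)%N.
  by rewrite -hE /Mval leq_trunc_div.
have hC1 : Num.ceil (((M.+1 * q)%:R - s%:R) / t%:R : rat) = (N.+1)%:Z.
  rewrite ceilM //.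
  rewrite (@divz_uniq _ (- (N.+1)%:Z) (s%:Z + (N.+1 * t)%:Z - (M.+1 * q)%:Z)) ?opprK //.
  - lia.
  - move: lo; rewrite mulSn; lia.
  - ring.
have hC0 : Num.ceil (((M * q)%:R - s%:R) / t%:R : rat)
      = (N.+1)%:Z - (qbar t q)%:Z - (inH s t q M)%:Z.
  by rewrite ceilM // -[RHS]opprK -hC1 ceilM // stepC //; ring.
rewrite hS natrD IH hE SH_S // natrD natrM.
rewrite /Sval /xM hE -/M hC1 hC0 !rmorphB /=.
have e : forall n : nat, (n%:Z)%:~R = n%:R :> rat by [].
rewrite !e -[M.+1]addn1 -[N.+1]addn1 !natrD.
by field.
Qed.

Section Comb.
Variables (s t q : nat).
Hypothesis t0 : (0 < t)%N.
Local Notation qh := (qhat t q).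
Local Notation H := (inH s t q).

Lemma inH_mod_t k : H k = H (k %% t).
Proof. by rewrite {1}(divn_eq k t) addnC inH_per. Qed.

Lemma Jsorted : sorted leq (Jseq s t q).
Proof. by rewrite /Jseq sorted_filter ?iota_sorted //; apply: leq_trans. Qed.

Lemma Jsize : size (Jseq s t q) = qh.
Proof. by rewrite /Jseq size_filter countJ. Qed.

Lemma memJ k : (k \in Jseq s t q) = (k < t)%N && H k.
Proof. by rewrite /Jseq mem_filter mem_iota add0n andbC. Qed.

Lemma Jbounds k : (k < t)%N -> H k -> (jj s t q 0 <= k <= jj s t q qh.-1)%N.
Proof.
move=> kt hk.
have kJ : k \in Jseq s t q by rewrite memJ kt hk.
have ik : (index k (Jseq s t q) < qh)%N by rewrite -Jsize index_mem.
have hn := nth_index 0 kJ.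
have hs := sorted_leq_nth leq_trans leqnn 0 Jsorted.
have q0 : (0 < qh)%N by apply: leq_ltn_trans ik.
have hq : (qh.-1 < qh)%N by case: (qh) q0.
have hi : (index k (Jseq s t q) <= qh.-1)%N by case: (qh) ik.
rewrite /jj; apply/andP; split.
- rewrite -[X in (_ <= X)%N]hn; apply: hs => //; by rewrite unfold_in /= Jsize.
- rewrite -[X in (X <= _)%N]hn; apply: hs => //; by rewrite unfold_in /= Jsize.
Qed.

Lemma SH0 a b : (forall k, (a <= k < b)%N -> H k -> False) -> SH s t q a b = 0%N.
Proof.
move=> h; rewrite /SH big_nat_cond big1 // => k /andP[hk hh].
by case: (h k hk hh).
Qed.

Lemma SHcat a b c : (a <= b)%N -> (b <= c)%N -> SH s t q a c = (SH s t q a b + SH s t q b c)%N.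
Proof. by move=> ab bc; rewrite /SH (big_cat_nat ab bc). Qed.

Lemma SHblock u : SH s t q (u * t) (u * t + t) = (SH s t q 0 t + u * t * qh)%N.
Proof.
rewrite /SH -{1}[(u * t)%N]add0n big_addn addKn.
under eq_bigl => i do rewrite inH_per.
rewrite big_split /= -big_filter big_const_seq iter_addn_0 big_filter.
by rewrite /index_iota subn0 countJ.
Qed.

End Comb.

Lemma SHu s t q u : (0 < t)%N ->
  (SH s t q 0 (u * t))%:R = u%:R * (SH s t q 0 t)%:R
     + (qhat t q)%:R * t%:R * ((u%:R - 1) * u%:R / 2) :> rat.
Proof.
move=> t0; elim: u => [|u IH]; first by rewrite mul0n /SH big_geq //; field.
rewrite mulSnr (@SHcat s t q 0 (u * t) _ (leq0n _) (leq_addr _ _)) SHblock // natrD IH.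
by rewrite !natrD !natrM -addn1 natrD; field.
Qed.

Theorem theorem9 (s t q N : nat)
  (hs : (s < q)%N) (ht1 : (1 <= t)%N) (htq : (t < q)%N)
  (hndvd : ~~ (t %| q)%N) (hcop : coprime t q) :
  let M := Mval s t q N in
  let S := Sval s t q N in
  let j0 := jj s t q 0 in
  let jl := jj s t q (qhat t q).-1 in
  let SJ := SH s t q 0 t in
  [/\ (M <= j0)%N -> (Splus s t q N)%:R = S,
      (j0 < M)%N -> (M <= jl)%N -> (Splus s t q N)%:R = S + (SH s t q 0 M)%:R,
      (jl < M)%N -> (M <= j0 + t)%N -> (Splus s t q N)%:R = S + SJ%:R
    & (jl < M)%N -> (j0 + t < M)%N ->
      let u := ((M - 1) %/ t)%N in
      (Splus s t q N)%:R =
        S + u%:R * SJ%:R + (qhat t q)%:R * t%:R * ((u%:R - 1) * u%:R / 2)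
          + (SH s t q (u * t) M)%:R :> rat].
Proof.
move=> M S j0 jl SJ.
have t0 : (0 < t)%N := ht1.
have E := @main_id s t q N hs t0 htq; rewrite -/M -/S in E.
have bnd : forall k, inH s t q k -> (j0 <= k %% t <= jl)%N /\ (k %% t <= k)%N.
  move=> k hk; split; last exact: leq_mod.
  by apply: Jbounds => //; [rewrite ltn_pmod | rewrite -inH_mod_t].
split.
- move=> hM; rewrite E SH0 ?addr0 // => k /andP[_ kM] hk.
  have [/andP[h1 _] h2] := bnd k hk; lia.
- by move=> _ _; rewrite E.
- move=> h1 h2; rewrite E; congr (_ + _%:R).
  have [Mt|tM] := leqP M t.
    rewrite /SJ (@SHcat s t q 0 M t (leq0n M) Mt) [X in (_ = _ + X)%N]SH0 ?addn0 //.
    move=> k /andP[Mk kt] hk; have [/andP[_ h3] h4] := bnd k hk.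
    move: h3; rewrite modn_small //; lia.
  rewrite /SJ (@SHcat s t q 0 t M (leq0n t) (ltnW tM)) [X in (_ + X = _)%N]SH0 ?addn0 //.
  move=> k /andP[tk kM] hk; have [/andP[h3 _] h4] := bnd k hk.
  have : (k %% t <= k - t)%N.
    rewrite {2}(divn_eq k t).
    have : (0 < k %/ t)%N by rewrite divn_gt0.
    move=> h; nia.
  lia.
- move=> h1 h2 u.
  have uM : (u * t <= M)%N.
    by apply: leq_trans (leq_trunc_div _ _) _; rewrite leq_subr.
  rewrite E (@SHcat s t q 0 (u * t) M (leq0n _) uM) natrD SHu //; ring.
Qed.
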